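(* $\mathrm{rad}(\mathcal{P}_\infty)\subset\mathcal{P}_2$. That is, if $r$ is a Hermitian symmetric polynomial on $\mathbb{C}^n$ with $r\ge0$ and $r^N(z,\overline z)=\|f(z)\|^2$ for some positive integer $N$ and holomorphic polynomial mapping $f$, then for all $z,w\in\mathbb{C}^n$ the $2\times2$ matrix $\begin{pmatrix} r(z,\overline z) & r(z,\overline w)\\ r(w,\overline z) & r(w,\overline w)\end{pmatrix}$ is non-negative definite.
   Context: A Hermitian symmetric polynomial is $r(z,\overline w)=\sum c_{\alpha\beta}z^\alpha\overline w^\beta$ with $c_{\alpha\beta}=\overline{c_{\beta\alpha}}$. $\mathcal{P}_\infty$: those $r$ with $r(z,\overline z)=\|h(z)\|^2$ for a holomorphic polynomial mapping $h$. $\mathrm{rad}(\mathcal{P}_\infty)$: those $r$ with $r(z,\overline z)\ge0$ for all $z$ and $r^N\in\mathcal{P}_\infty$ for some positive integer $N$. $\mathcal{P}_2$: those $r$ such that for all $z_1,z_2$ the matrix $(r(z_i,\overline{z_j}))_{i,j=1}^2$ is non-negative definite. *)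

(* Defs.v *)
From HB Require Import structures.
From mathcomp Require Import all_boot all_order all_algebra.
From mathcomp Require Import mpoly.
From mathcomp.real_closed Require Import complex.
Set Implicit Arguments. Unset Strict Implicit. Unset Printing Implicit Defensive.
Import Order.TTheory GRing.Theory Num.Theory.
Local Open Scope ring_scope.

(* A polynomial r(z, wbar) on C^n x C^n is an mpoly in n+n variables:
   variables lshift (0..n-1) stand for z, variables rshift (n..2n-1) for wbar. *)

Definition swap_idx (n : nat) (i : 'I_(n + n)) : 'I_(n + n) :=
  match split i with inl j => rshift n j | inr j => lshift n j end.

Definition swap_mon (n : nat) (m : 'X_{1.. n + n}) : 'X_{1.. n + n} :=
  [multinom m (swap_idx i) | i < n + n].

Definition hermitian_sym (R : rcfType) (n : nat) (r : {mpoly R[i][n + n]}) : Prop :=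
  forall m : 'X_{1.. n + n}, r@_m = (r@_(swap_mon m))^*.

Definition heval (R : rcfType) (n : nat) (r : {mpoly R[i][n + n]})
  (z w : 'I_n -> R[i]) : R[i] :=
  r.@[fun i => match split i with inl j => z j | inr j => (w j)^* end].

Definition sqnorm_map (R : rcfType) (n k : nat) (h : 'I_k -> {mpoly R[i][n]})
  (z : 'I_n -> R[i]) : R[i] :=
  \sum_(j < k) (h j).@[z] * ((h j).@[z])^*.

Definition in_Pinf (R : rcfType) (n : nat) (r : {mpoly R[i][n + n]}) : Prop :=
  exists (k : nat) (h : 'I_k -> {mpoly R[i][n]}),
    forall z : 'I_n -> R[i], heval r z z = sqnorm_map h z.

Definition in_radPinf (R : rcfType) (n : nat) (r : {mpoly R[i][n + n]}) : Prop :=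
  (forall z : 'I_n -> R[i], 0 <= heval r z z) /\
  exists N : nat, (0 < N)%N /\ in_Pinf (r ^+ N).

Definition nonneg_def (R : rcfType) (m : nat) (M : 'M[R[i]]_m) : Prop :=
  forall v : 'cV[R[i]]_m, 0 <= ((map_mx Num.conj v)^T *m M *m v) 0 0.

Definition in_P2 (R : rcfType) (n : nat) (r : {mpoly R[i][n + n]}) : Prop :=
  forall z1 z2 : 'I_n -> R[i],
    nonneg_def (\matrix_(a < 2, b < 2)
      heval r (if a == 0 :> nat then z1 else z2) (if b == 0 :> nat then z1 else z2)).

(* Main.v *)
Require Import Defs.
From HB Require Import structures.
From mathcomp Require Import all_boot all_order all_algebra.
From mathcomp Require Import mpoly.
From mathcomp.real_closed Require Import complex.
From mathcomp Require Import ring.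
Set Implicit Arguments. Unset Strict Implicit. Unset Printing Implicit Defensive.
Import Order.TTheory GRing.Theory Num.Theory.
Local Open Scope ring_scope.

Section A.
Variable R : rcfType.
Local Notation C := (R[i]).

Lemma meval_muni k (p : {mpoly C[k.+1]}) (v : 'I_k.+1 -> C) :
  p.@[v] = (map_poly (meval (fun i : 'I_k => v (widen_ord (leqnSn k) i))) (muni p)).[v ord_max].
Proof.
rewrite muniE mevalE raddf_sum /= horner_sum; apply: eq_bigr => m _.
rewrite -mul_polyC rmorphM /= map_polyC map_polyXn hornerCM hornerXn.
rewrite /= mevalZ mevalX big_ord_recr /= mulrA; congr (_ * _ * _).
by apply: eq_bigr => i _; rewrite mnmE.
Qed.


Lemma Zreal k (p : {mpoly C[k]}) :
  (forall u : 'I_k -> R, p.@[fun i => (u i)%:C%C] = 0) -> forall v, p.@[v] = 0.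
Proof.
elim: k p => [|k IH] p H v.
  by rewrite -(H (fun _ => 0)); apply: meval_eq => -[].
rewrite meval_muni.
suff -> : map_poly (meval (fun i : 'I_k => v (widen_ord (leqnSn k) i))) (muni p) = 0
  by rewrite horner0.
apply/polyP => j; rewrite coef_map coef0 /=.
apply: IH => u.
rewrite -(coef_map (meval (fun i => (u i)%:C%C))).
suff -> : map_poly (meval (fun i => (u i)%:C%C)) (muni p) = 0 by rewrite coef0.
set q := map_poly _ _.
apply/eqP; apply/negPn/negP => nq.
set rs := [seq (t%:R : C) | t <- iota 0 (size q)].
have hu : uniq rs.
  by rewrite map_inj_uniq ?iota_uniq // => a b /eqP; rewrite eqr_nat => /eqP.
have hr : all (root q) rs.
  apply/allP => x /mapP [t _ ->]; rewrite /root.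
  pose u' (i : 'I_k.+1) : R :=
    match unlift ord_max i with Some j => u j | None => t%:R end.
  have := H u'; rewrite meval_muni => <-.
  have -> : u' ord_max = t%:R by rewrite /u' unlift_none.
  rewrite rmorph_nat /q.
  apply/eqP; congr (_.[_]); apply: eq_map_poly => f; apply: meval_eq => i; rewrite /u'; case: unliftP => [j' Ej|E].
    by congr ((u _)%:C%C); apply/val_inj; move/(congr1 val): Ej => /=; rewrite /bump leqNgt ltn_ord /= add0n.
  by move/(congr1 val): E => /= E; have := ltn_ord i; rewrite E ltnn.
by have := max_poly_roots nq hr hu; rewrite size_map size_iota ltnn.
Qed.


Lemma ii : 'i * - 'i = 1 :> C.
Proof. by rewrite mulrN -expr2 sqrCi opprK. Qed.

Lemma cjR (x : R) : (x%:C%C)^* = x%:C%C :> C.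
Proof. exact: conjc_real. Qed.

Lemma split_lshift n (j : 'I_n) : split (lshift n j) = inl j.
Proof. exact: (unsplitK (inl j)). Qed.
Lemma split_rshift n (j : 'I_n) : split (rshift n j) = inr j.
Proof. exact: (unsplitK (inr j)). Qed.

Definition pv n (a b : 'I_n -> C) (i : 'I_(n + n)) : C :=
  match split i with inl j => a j | inr j => b j end.

Lemma polar n (P : {mpoly C[n + n]}) :
  (forall z, P.@[pv z (fun j => (z j)^*)] = 0) -> forall a b, P.@[pv a b] = 0.
Proof.
move=> H a b.
pose L := [tuple (match split i with
   | inl j => 'X_(lshift n j) + 'i *: 'X_(rshift n j)
   | inr j => 'X_(lshift n j) - 'i *: 'X_(rshift n j) end : {mpoly C[n + n]}) | i < n + n].
have EL v i : (tnth L i).@[v] = pv (fun j => v (lshift n j) + 'i * v (rshift n j))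
      (fun j => v (lshift n j) - 'i * v (rshift n j)) i.
  by rewrite tnth_mktuple /pv; case: split => j; rewrite ?raddfD ?raddfN /= -mul_mpolyC (@mevalM _ C) (@mevalC _ C) !(@mevalXU _ C).
have key : forall v, (P \mPo L).@[v] = 0.
  apply: Zreal => u; rewrite comp_mpoly_meval.
  rewrite -(H (fun j => (u (lshift n j))%:C%C + 'i * (u (rshift n j))%:C%C)).
  apply: meval_eq => i; rewrite EL /pv; case: split => j //.
  by rewrite rmorphD rmorphM /= !cjR conjCi mulNr.
have := key (pv (fun j => (a j + b j)/2) (fun j => (a j - b j)/2 * - 'i)).
rewrite comp_mpoly_meval => <-; apply: meval_eq => i.
have h2 : (2:C) != 0 by rewrite pnatr_eq0.
rewrite EL /pv; case: (split i) => j; rewrite /pv !split_lshift !split_rshift mulrCA ii mulr1;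
  by field.
Qed.


Definition cj : C -> C := Num.conj.

Lemma meval_conj k (f : {mpoly C[k]}) (w : 'I_k -> C) :
  (map_mpoly cj f).@[fun j => (w j)^*] = (f.@[w])^*.
Proof.
rewrite !mevalE (perm_big _ (msupp_map_mpoly _ (can_inj (@conjCK _)))) rmorph_sum.
apply: eq_bigr => m _; rewrite mcoeff_map_mpoly rmorphM rmorph_prod; congr (_ * _).
by apply: eq_bigr => i _; rewrite rmorphXn.
Qed.

Definition lL n (f : {mpoly C[n]}) : {mpoly C[n + n]} :=
  f \mPo [tuple 'X_(lshift n i) | i < n].
Definition lR n (f : {mpoly C[n]}) : {mpoly C[n + n]} :=
  (map_mpoly cj f) \mPo [tuple 'X_(rshift n i) | i < n].

Lemma lL_eval n (f : {mpoly C[n]}) a b : (lL f).@[pv a b] = f.@[a].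
Proof.
rewrite comp_mpoly_meval; apply: meval_eq => i.
by rewrite tnth_mktuple mevalXU /pv split_lshift.
Qed.

Lemma lR_eval n (f : {mpoly C[n]}) a b : (lR f).@[pv a (fun j => (b j)^*)] = (f.@[b])^*.
Proof.
rewrite comp_mpoly_meval -meval_conj; apply: meval_eq => i.
by rewrite tnth_mktuple mevalXU /pv split_rshift.
Qed.


Lemma hevalE n (r : {mpoly C[n + n]}) z w : heval r z w = r.@[pv z (fun j => (w j)^*)].
Proof. by []. Qed.

Lemma powpol n (r : {mpoly C[n + n]}) N : in_Pinf (r ^+ N) ->
  exists k (h : 'I_k -> {mpoly C[n]}), forall a w,
    (heval r a w) ^+ N = \sum_(j < k) (h j).@[a] * ((h j).@[w])^*.
Proof.
move=> [k [h Hh]]; exists k, h => a w.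
set P := r ^+ N - \sum_(j < k) lL (h j) * lR (h j).
have Eb : forall a w, \sum_(j < k) (lL (h j) * lR (h j)).@[pv a (fun j => (w j)^*)]
   = \sum_(j < k) (h j).@[a] * ((h j).@[w])^*.
  move=> a' w'; apply: eq_bigr => j _; rewrite (@mevalM _ C).
  by congr (_ * _); [exact: lL_eval | exact: lR_eval].
have HP : forall z, P.@[pv z (fun j => (z j)^*)] = 0.
  move=> z; have := Hh z; rewrite /heval /sqnorm_map => E.
  rewrite /P rmorphB /= E rmorph_sum /=.
  by rewrite Eb subrr.
have := polar HP a (fun j => (w j)^*).
rewrite /P rmorphB rmorph_sum /= Eb => /subr0_eq <-.
by rewrite hevalE rmorphXn.
Qed.

Lemma herm n (r : {mpoly C[n + n]}) : (forall z, 0 <= heval r z z) ->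
  forall z w, heval r z w = (heval r w z)^*.
Proof.
move=> H0.
pose rs := (map_mpoly cj r) \mPo [tuple 'X_(swap_idx i) | i < n + n].
have Ers z w : rs.@[pv z (fun j => (w j)^*)] = (heval r w z)^*.
  rewrite comp_mpoly_meval hevalE -meval_conj; apply: meval_eq => i.
  rewrite tnth_mktuple mevalXU /swap_idx /pv.
  by case: (split i) => j; rewrite ?split_rshift ?split_lshift ?conjCK.
have HP : forall x, (r - rs).@[pv x (fun j => (x j)^*)] = 0.
  by move=> x; rewrite rmorphB /= Ers -hevalE geC0_conj ?subrr.
move=> z w; have := polar HP z (fun j => (w j)^*).
by rewrite rmorphB /= Ers -hevalE => /subr0_eq.
Qed.

End A.

Section CSs.
Variable C : numClosedFieldType.
Lemma CS k (a b : 'I_k -> C) :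
  (\sum_(j < k) a j * (b j)^*) * (\sum_(j < k) a j * (b j)^*)^*
  <= (\sum_(j < k) a j * (a j)^*) * (\sum_(j < k) b j * (b j)^*).
Proof.
set S := \sum_(j < k) a j * (b j)^*.
set Aa := \sum_(j < k) a j * (a j)^*.
set Bb := \sum_(j < k) b j * (b j)^*.
have A0 : 0 <= Aa by apply: sumr_ge0 => j _; exact: mul_conjC_ge0.
have B0 : 0 <= Bb by apply: sumr_ge0 => j _; exact: mul_conjC_ge0.
have SJ : S^* = \sum_(j < k) b j * (a j)^*.
  by rewrite rmorph_sum; apply: eq_bigr => j _; rewrite rmorphM /= conjCK mulrC.
have [Bz|Bnz] := eqVneq Bb 0.
  have bz j : b j = 0.
    apply/eqP; rewrite -mul_conjC_eq0; apply/eqP.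
    by apply: (psumr_eq0P _ Bz) => // i _; exact: mul_conjC_ge0.
  have -> : S = 0 by rewrite /S big1 // => j _; rewrite bz rmorph0 mulr0.
  by rewrite mul0r Bz mulr0.
have Bp : 0 < Bb by rewrite lt_def Bnz B0.
have BJ : Bb^* = Bb by rewrite geC0_conj.
have key : 0 <= \sum_(j < k) (Bb * a j - S * b j) * (Bb * a j - S * b j)^*.
  by apply: sumr_ge0 => j _; exact: mul_conjC_ge0.
have E : \sum_(j < k) (Bb * a j - S * b j) * (Bb * a j - S * b j)^* = Bb * (Aa * Bb - S * S^*).
  rewrite (eq_bigr (fun j => Bb * Bb * (a j * (a j)^*) - Bb * S^* * (a j * (b j)^*)
      - S * Bb * (b j * (a j)^*) + S * S^* * (b j * (b j)^*))); last first.
    by move=> j _; rewrite rmorphB !rmorphM /= BJ; ring.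
  rewrite !big_split /= !sumrN -!mulr_sumr -SJ -/S -/Aa -/Bb; ring.
by move: key; rewrite E pmulr_rge0 // subr_ge0.
Qed.

End CSs.

Section Q.
Variable C : numClosedFieldType.
Lemma quad (M : 'M[C]_2) (v : 'cV[C]_2) :
  ((map_mx Num.conj v)^T *m M *m v) 0 0 =
  (v 0 0)^* * M 0 0 * v 0 0 + (v 0 0)^* * M 0 1 * v 1 0
  + (v 1 0)^* * M 1 0 * v 0 0 + (v 1 0)^* * M 1 1 * v 1 0.
Proof.
rewrite !mxE !big_ord_recr !big_ord0 /= !add0r !mxE.
rewrite !big_ord_recr !big_ord0 /= !add0r !mxE.
have -> : widen_ord (leqnSn 1) ord_max = 0 :> 'I_2 by apply/val_inj.
have -> : ord_max = 1 :> 'I_2 by apply/val_inj.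
ring.
Qed.

Lemma psd2 (A B D x y : C) : 0 <= A -> 0 <= D -> B * B^* <= A * D ->
  0 <= x^* * A * x + x^* * B * y + y^* * B^* * x + y^* * D * y.
Proof.
move=> A0 D0 BA.
have [Az|Anz] := eqVneq A 0.
  have : B * B^* == 0.
    by rewrite eq_le mul_conjC_ge0 andbT; move: BA; rewrite Az mul0r.
  rewrite mul_conjC_eq0 => /eqP Bz; rewrite Az Bz rmorph0 !mulr0 !mul0r !add0r.
  by rewrite mulrAC mulrC mulr_ge0 // mulrC mul_conjC_ge0.
have Ap : 0 < A by rewrite lt_def Anz A0.
have AJ : A^* = A by rewrite geC0_conj.
rewrite -(pmulr_rge0 _ Ap).
have -> : A * (x^* * A * x + x^* * B * y + y^* * B^* * x + y^* * D * y) =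
  (A * x + B * y) * (A * x + B * y)^* + (A * D - B * B^*) * (y * y^*).
  by rewrite rmorphD !rmorphM /= AJ; ring.
by rewrite addr_ge0 ?mul_conjC_ge0 // mulr_ge0 ?mul_conjC_ge0 // subr_ge0.
Qed.
End Q.

Theorem lemma7p1 (R : rcfType) (n : nat) (r : {mpoly R[i][n + n]}) :
  hermitian_sym r -> in_radPinf r -> in_P2 r.
Proof.
move=> _ [Hpos [N [N0 HN]]] z1 z2 v.
have [k [h Hh]] := powpol HN.
rewrite quad !mxE /=.
have HB : heval r z2 z1 = (heval r z1 z2)^* by rewrite (herm Hpos z1 z2) conjCK.
rewrite HB; apply: psd2; [exact: Hpos | exact: Hpos |].
rewrite -(ler_pXn2r N0) ?nnegrE ?mul_conjC_ge0 ?mulr_ge0 //.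
rewrite !exprMn -[(_^*)^+N]rmorphXn !Hh; exact: CS.
Qed.
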